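(* Let $\mathcal J=\mathbb N\times(\mathbb N\cup\{\infty\})$ be Johnstone's dcpo, equipped with its Scott topology, and let $\mu$ be the map on the Scott-open subsets of $\mathcal J$ given by $\mu(U)=1$ if $U\neq\emptyset$ and $\mu(\emptyset)=0$. Then $\mu$ is a point-continuous valuation on $\mathcal J$ that is not a minimal valuation.
   Context: Johnstone's dcpo: $\mathcal J=\mathbb N\times(\mathbb N\cup\{\infty\})$ ($\infty$ is a new element above all natural numbers), ordered by $(a,b)\le(c,d)$ iff either ($a=c$ and $b\le d$) or ($d=\infty$ and $b\le c$). For a topological space $X$ with lattice of open sets $\mathcal O X$, a valuation is a map $\nu:\mathcal OX\to[0,\infty]$ with $\nu(\emptyset)=0$, monotone, and modular ($\nu(U)+\nu(V)=\nu(U\cup V)+\nu(U\cap V)$); it is continuous if it preserves suprema of directed families of open sets. Continuous valuations are ordered pointwise (stochastic order), forming a dcpo $\mathcal VX$ in which directed suprema are pointwise. $\delta_x$ is the Dirac valuation ($\delta_x(U)=1$ if $x\in U$, else $0$). A simple valuation is a finite sum $\sum_{i=1}^n r_i\delta_{x_i}$ with $r_i\in[0,\infty)$. The minimal valuations are the elements of the smallest subset of $\mathcal VX$ containing all simple valuations and closed under directed suprema in $\mathcal VX$. A valuation $\nu$ is point-continuous if for every open $U$ and every real $r$ with $0\le r<\nu(U)$ there is a finite subset $A\subseteq U$ such that $\nu(V)>r$ for every open $V\supseteq A$. *)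

(* Defs.v *)
From Stdlib Require List.
From mathcomp Require Import all_boot all_order all_algebra.
From mathcomp Require Import all_classical all_reals ereal.
Set Implicit Arguments. Unset Strict Implicit. Unset Printing Implicit Defensive.
Import Order.TTheory GRing.Theory Num.Theory.
Local Open Scope classical_set_scope.
Local Open Scope ring_scope.

Definition directed_by {T : Type} (le : T -> T -> Prop) (D : set T) : Prop :=
  D !=set0 /\
  (forall x y, D x -> D y -> exists2 z, D z & le x z /\ le y z).

Definition is_lub {T : Type} (le : T -> T -> Prop) (D : set T) (s : T) : Prop :=
  (forall x, D x -> le x s) /\ (forall u, (forall x, D x -> le x u) -> le s u).

Definition scott_open {T : Type} (le : T -> T -> Prop) (U : set T) : Prop :=
  (forall x y, le x y -> U x -> U y) /\
  (forall D s, directed_by le D -> is_lub le D s -> U s -> D `&` U !=set0).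

(* [None] plays the role of infinity. *)
Definition Jtype := (nat * option nat)%type.

Definition le_inf (b d : option nat) : Prop :=
  match d with
  | None => True
  | Some d' => match b with Some b' => (b' <= d')%N | None => False end
  end.

Definition Jle (p q : Jtype) : Prop :=
  (p.1 = q.1 /\ le_inf p.2 q.2) \/ (q.2 = None /\ le_inf p.2 (Some q.1)).

Definition Jopen : set Jtype -> Prop := scott_open Jle.

Section Valuations.
Context {X : Type} (isOpen : set X -> Prop) {R : realType}.
Local Open Scope ereal_scope.

Definition is_valuation (nu : set X -> \bar R) : Prop :=
  (forall U, isOpen U -> 0 <= nu U) /\
  nu set0 = 0 /\
  (forall U V, isOpen U -> isOpen V -> U `<=` V -> nu U <= nu V) /\
  (forall U V, isOpen U -> isOpen V ->
     nu U + nu V = nu (U `|` V) + nu (U `&` V)).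

Definition directed_opens (D : set (set X)) : Prop :=
  (forall U, D U -> isOpen U) /\ directed_by (fun U V => U `<=` V) D.

Definition is_cont_valuation (nu : set X -> \bar R) : Prop :=
  is_valuation nu /\
  (forall D, directed_opens D ->
     nu (\bigcup_(U in D) U) = ereal_sup [set nu U | U in D]).

Definition val_le (nu1 nu2 : set X -> \bar R) : Prop :=
  forall U, isOpen U -> nu1 U <= nu2 U.

Definition dirac (x : X) : set X -> \bar R :=
  fun U => if `[< U x >] then 1 else 0.

Definition simple_of (s : seq (R * X)) : set X -> \bar R :=
  fun U => \sum_(p <- s) ((p.1)%:E * dirac p.2 U).

Definition is_simple_valuation (nu : set X -> \bar R) : Prop :=
  exists s : seq (R * X), (forall p, List.In p s -> (0 <= p.1)%R) /\
    (forall U, isOpen U -> nu U = simple_of s U).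

Definition is_directed_sup (F : set (set X -> \bar R)) (nu : set X -> \bar R) :=
  (forall f, F f -> is_cont_valuation f) /\ directed_by val_le F /\
  is_cont_valuation nu /\
  (forall U, isOpen U -> nu U = ereal_sup [set f U | f in F]).

Definition is_minimal_valuation (nu : set X -> \bar R) : Prop :=
  forall S : set (set X -> \bar R),
    (forall f, is_cont_valuation f -> is_simple_valuation f -> S f) ->
    (forall F g, F `<=` S -> is_directed_sup F g -> S g) ->
    S nu.

Definition is_point_continuous (nu : set X -> \bar R) : Prop :=
  forall U (r : R), isOpen U -> (0 <= r)%R -> r%:E < nu U ->
    exists A : seq X, (forall a, List.In a A -> U a) /\
      forall V, isOpen V -> (forall a, List.In a A -> V a) -> r%:E < nu V.

End Valuations.

Definition Jmu (R : realType) : set Jtype -> \bar R :=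
  fun U => if `[< U !=set0 >] then 1%E else 0%E.

(* Main.v *)
Require Import Defs.
From mathcomp Require Import all_boot all_order all_algebra.
From mathcomp Require Import all_classical all_reals ereal.
From mathcomp Require Import lra.
Set Implicit Arguments. Unset Strict Implicit. Unset Printing Implicit Defensive.
Import Order.TTheory GRing.Theory Num.Theory.
Local Open Scope classical_set_scope.
Local Open Scope ring_scope.
Lemma Jle_col c n m : (n <= m)%N -> Jle (c, Some n) (c, Some m).
Proof. by move=> h; left. Qed.
Lemma Jle_top c b : Jle (c, b) (c, None).
Proof. by left; split => //; case: b. Qed.
Lemma Jle_jump c n c' : (n <= c')%N -> Jle (c, Some n) (c', None).
Proof. by move=> h; right. Qed.

Lemma Jopen_col U c : Jopen U -> U (c, None) -> exists n, U (c, Some n).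
Proof.
move=> [up sc] Uc.
have := sc [set p | p.1 = c /\ exists n, p.2 = Some n] (c, None).
case.
- split; first by exists (c, Some 0%N); split => //; exists 0%N.
  move=> [a1 b1] [a2 b2] [/= -> [n1 ->]] [/= -> [n2 ->]].
  exists (c, Some (maxn n1 n2)); first by split => //; exists (maxn n1 n2).
  by split; left; split => //=; rewrite ?leq_maxl ?leq_maxr.
- split.
  + by move=> [a b] [/= -> [n ->]]; exact: Jle_top.
  + move=> [a ob] H.
    case: ob H => [d|] H.
    * have := H (c, Some d.+1) (conj erefl (ex_intro _ d.+1 erefl)).
      by case => [[_ /=]|[//]]; rewrite ltnn.
    * have := H (c, Some a.+1) (conj erefl (ex_intro _ a.+1 erefl)).
      case => [[/= <- _]|[_ /=]]; first by left.
      by rewrite ltnn.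
- by exact: Uc.
- by move=> [a b] [[/= -> [n ->]] Ux]; exists n.
Qed.

Lemma Jopen_intro U :
  (forall p q, Jle p q -> U p -> U q) ->
  (forall c, U (c, None) -> exists n, U (c, Some n)) -> Jopen U.
Proof.
move=> up col; split => // D [c ob] [[x0 Dx0] dir] [ubD lub] Us.
apply: contrapT => hn.
have nU : forall x, D x -> ~ U x by move=> x Dx Ux; apply: hn; exists x.
case: ob Us lub ubD => [n|] Us lub ubD.
- have ub : forall x, D x -> Jle x (c, Some n.-1).
    move=> [a b] Dx; case: (ubD _ Dx) => [[/= ac]|[//]]; subst a.
    case: b Dx => [b|//] Dx /= bn; left; split => //=.
    have : (b < n)%N.
      rewrite ltnNge; apply/negP => nb; apply: (nU _ Dx).
      by apply: up Us; exact: Jle_col.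
    by case: n {Us lub ubD bn} => //.
  case: (lub _ ub) => [[_ /=]|[//]].
  case: n Us {lub} ub ubD => [|n] Us ub ubD /=; last by rewrite ltnn.
  move=> _; case: x0 Dx0 => a b Dx0.
  case: (ubD _ Dx0) => [[/= ac]|[//]]; subst a.
  case: b Dx0 => [b|//] Dx0 /=; rewrite leqn0 => /eqP b0; subst b.
  by apply: (nU _ Dx0).
- case: (col _ Us) => n Un.
  pose c' := (maxn c n).+1.
  have ub : forall x, D x -> Jle x (c', None).
    move=> [a b] Dx; case: (ubD _ Dx) => [[/= ac _]|[_ /=]].
    + subst a; case: b Dx => [b|] Dx; last by exfalso; exact: (nU _ Dx).
      right; split => //=.
      have : (b < n)%N.
        rewrite ltnNge; apply/negP => nb; apply: (nU _ Dx).
        by apply: up Un; exact: Jle_col.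
      by move/ltnW => h; apply: (leq_trans h); rewrite /c' leqW // leq_maxr.
    + case: b Dx => [b|//] Dx /= bc; right; split => //=.
      by apply: (leq_trans bc); rewrite /c' leqW // leq_maxl.
  case: (lub _ ub) => [[/= cc _]|[_ //]].
  by move: (leq_maxl c n); rewrite {1}cc ltnn.
Qed.

Lemma Jopen_up U p q : Jopen U -> Jle p q -> U p -> U q.
Proof. by case=> up _; exact: up. Qed.

Lemma JopenU U V : Jopen U -> Jopen V -> Jopen (U `|` V).
Proof.
move=> oU oV; apply: Jopen_intro.
- move=> p q pq [Up|Vp]; [left; exact: Jopen_up pq Up| right; exact: Jopen_up pq Vp].
- move=> c [Uc|Vc].
  + by case: (Jopen_col oU Uc) => n h; exists n; left.
  + by case: (Jopen_col oV Vc) => n h; exists n; right.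
Qed.

Lemma JopenI U V : Jopen U -> Jopen V -> Jopen (U `&` V).
Proof.
move=> oU oV; apply: Jopen_intro.
- by move=> p q pq [Up Vp]; split; [exact: Jopen_up pq Up| exact: Jopen_up pq Vp].
- move=> c [Uc Vc].
  case: (Jopen_col oU Uc) => n1 h1; case: (Jopen_col oV Vc) => n2 h2.
  exists (maxn n1 n2); split.
  + by apply: (Jopen_up oU _ h1); apply: Jle_col; rewrite leq_maxl.
  + by apply: (Jopen_up oV _ h2); apply: Jle_col; rewrite leq_maxr.
Qed.

Lemma JopenT : Jopen setT.
Proof. by apply: Jopen_intro => // c _; exists 0%N. Qed.

Lemma Jopen0 : Jopen set0.
Proof. by apply: Jopen_intro. Qed.

Lemma Jopen_tail U : Jopen U -> U !=set0 -> exists K, forall c, (K <= c)%N -> U (c, None).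
Proof.
move=> oU [[a b] Uab].
have Ua : U (a, None) by apply: (Jopen_up oU _ Uab); exact: Jle_top.
case: (Jopen_col oU Ua) => n Un; exists n => c nc.
by apply: (Jopen_up oU _ Un); exact: Jle_jump.
Qed.
Section Mu.
Variable R : realType.
Local Open Scope ereal_scope.

Lemma Jmu1 U : U !=set0 -> Jmu R U = 1.
Proof. by move=> h; rewrite /Jmu asboolT. Qed.
Lemma Jmu0 U : ~ (U !=set0) -> Jmu R U = 0.
Proof. by move=> h; rewrite /Jmu asboolF. Qed.
Lemma Jmu_ge0 U : 0 <= Jmu R U.
Proof. by rewrite /Jmu; case: asboolP. Qed.

Lemma Jmu_val : is_valuation Jopen (Jmu R).
Proof.
split; first by move=> U _; exact: Jmu_ge0.
split; first by rewrite Jmu0 // => -[].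
split.
  move=> U V _ _ UV; case: (pselect (U !=set0)) => [[x Ux]|h].
  - by rewrite (Jmu1 (ex_intro _ x Ux)) (Jmu1 (ex_intro _ x (UV _ Ux))).
  - by rewrite (Jmu0 h) Jmu_ge0.
move=> U V oU oV.
case: (pselect (U !=set0)) => hU; case: (pselect (V !=set0)) => hV.
- case: (Jopen_tail oU hU) => K1 h1; case: (Jopen_tail oV hV) => K2 h2.
  rewrite (Jmu1 hU) (Jmu1 hV) Jmu1; last by case: hU => x ?; exists x; left.
  rewrite Jmu1 //; exists (maxn K1 K2, None); split.
  + by apply: h1; rewrite leq_maxl.
  + by apply: h2; rewrite leq_maxr.
- rewrite (Jmu1 hU) (Jmu0 hV) Jmu1; last by case: hU => x ?; exists x; left.
  rewrite [Jmu R (U `&` V)]Jmu0; first by rewrite ?add0e ?adde0.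
  by move=> -[x [_ Vx]]; apply: hV; exists x.
- rewrite (Jmu0 hU) (Jmu1 hV) Jmu1; last by case: hV => x ?; exists x; right.
  rewrite [Jmu R (U `&` V)]Jmu0; first by rewrite ?add0e ?adde0.
  by move=> -[x [Ux _]]; apply: hU; exists x.
- rewrite (Jmu0 hU) (Jmu0 hV) Jmu0; last by case=> x [Ux|Vx]; [apply: hU|apply: hV]; exists x.
  rewrite [Jmu R (U `&` V)]Jmu0; first by rewrite ?add0e ?adde0.
  by move=> -[x [Ux _]]; apply: hU; exists x.
Qed.

Lemma Jmu_pc : is_point_continuous Jopen (Jmu R).
Proof.
move=> U r oU r0 rU.
case: (pselect (U !=set0)) => hU; last first.
  by move: rU; rewrite (Jmu0 hU) lte_fin ltNge r0.
case: hU => a Ua; exists [:: a]; split.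
  by move=> x [<-|[]].
move=> V oV hV; rewrite Jmu1; last by exists a; apply: hV; left.
by move: rU; rewrite Jmu1 //; exists a.
Qed.
End Mu.
Definition geK (K : nat) (ob : option nat) : Prop :=
  match ob with None => True | Some b => (K <= b)%N end.
Definition Qs (K : nat) : set Jtype := fun p => (K <= p.1)%N /\ geK K p.2.
Definition Vs (N : nat) (m : nat -> nat) : set Jtype :=
  fun p => (p.1 <= N)%N \/ geK (m p.1) p.2.
Definition Zs (a d K : nat) : set Jtype :=
  fun p => ((a < p.1 <= d)%N \/ (K <= p.1)%N) /\ geK K p.2.

Lemma geK_le K K' ob : (K <= K')%N -> geK K' ob -> geK K ob.
Proof. by case: ob => //= b h1 h2; exact: leq_trans h1 h2. Qed.

Lemma Jle_geK K p q : Jle p q -> geK K p.2 -> geK K q.2 \/ q.2 = None.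
Proof.
case: p q => [a b] [c d] [[/= _]|[/= -> _]]; last by right.
by case: d => [d|]; [case: b => //= b bd Kb; left; exact: leq_trans Kb bd|right].
Qed.

Lemma Qs_open K : Jopen (Qs K).
Proof.
apply: Jopen_intro.
- move=> [a b] [c d] pq [/= Ka Kb].
  case: pq => [[/= ac bd]|[/= dN bc]].
    by subst c; case: d bd => [d|] //= bd; split => //;
    case: b Kb bd => //= b Kb bd; exact: leq_trans Kb bd.
  rewrite dN; move: bc; case: b Kb => [b|//] /= Kb bc; split => //=; exact: leq_trans Kb bc.
- by move=> c [/= Kc _]; exists K; split => /=.
Qed.

Lemma Vs_open N m : Jopen (Vs N m).
Proof.
apply: Jopen_intro.
- move=> [a b] [c d] pq h.
  case: pq => [[/= ac bd]|[/= dN _]]; last by right; rewrite /= dN.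
  subst c; case: h => [h|h]; [by left|right].
  by case: d bd => [d|] //=; case: b h => //= b h bd; exact: leq_trans h bd.
- by move=> c _; exists (m c); right => /=.
Qed.

Lemma Zs_open a d K : Jopen (Zs a d K).
Proof.
apply: Jopen_intro.
- move=> [x b] [c e] pq [/= h Kb].
  case: pq => [[/= ac be]|[/= eN bc]].
    by subst c; split => //; case: e be => [e|] //=; case: b Kb => //= b Kb be; exact: leq_trans Kb be.
  rewrite eN; split => //=; right; move: bc.
  by case: b Kb => [b|//] /= Kb bc; exact: leq_trans Kb bc.
- by move=> c [/= h _]; exists K; split => /=.
Qed.

Lemma ZsU a b d K : (a <= b)%N -> (b <= d)%N -> Zs a b K `|` Zs b d K = Zs a d K.
Proof.
move=> ab bd; apply/seteqP; split => -[c e]; rewrite /Zs /=.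
- case=> -[h Ke]; split => //; case: h => [/andP [h1 h2]|h]; try by right.
  + by left; rewrite h1 (leq_trans h2 bd).
  + by left; rewrite (leq_ltn_trans ab h1) h2.
- move=> [[/andP [h1 h2]|h] Ke].
  + case: (leqP c b) => cb; [left|right]; split => //; left; apply/andP; split => //.
  + by left; split => //; right.
Qed.

Lemma ZsI a b d K : (b < K)%N -> Zs a b K `&` Zs b d K = Qs K.
Proof.
move=> bK; apply/seteqP; split => -[c e]; rewrite /Zs /Qs /=.
- move=> [[h1 Ke] [h2 _]]; split => //.
  case: h1 => [/andP [_ cb]|//]; case: h2 => [/andP [bc _]|Kc].
  + by move: (leq_ltn_trans cb bc); rewrite ltnn.
  + by move: (leq_ltn_trans cb bK); rewrite ltnNge Kc.
- by move=> [Kc Ke]; split; split => //; right.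
Qed.

Section RealVal.
Variable R : realType.
Implicit Types f : set Jtype -> \bar R.

Definition rf f U : R := fine (f U).

Lemma val_fin f : is_valuation Jopen f -> f setT != +oo%E ->
  forall U, Jopen U -> f U = (rf f U)%:E.
Proof.
move=> [ge0 [_ [mono _]]] fT U oU; rewrite /rf fineK //.
rewrite ge0_fin_numE; last exact: ge0.
apply: (le_lt_trans (mono _ _ oU JopenT (@subsetT _ U))).
by rewrite ltey.
Qed.

Lemma rf_ge0 f : is_valuation Jopen f -> f setT != +oo%E ->
  forall U, Jopen U -> 0 <= rf f U.
Proof.
move=> fv fT U oU; have := (fv.1 U oU); by rewrite (val_fin fv fT oU) lee_fin.
Qed.

Lemma rf_mono f : is_valuation Jopen f -> f setT != +oo%E ->
  forall U V, Jopen U -> Jopen V -> U `<=` V -> rf f U <= rf f V.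
Proof.
move=> fv fT U V oU oV UV; have := (fv.2.2.1 U V oU oV UV).
by rewrite (val_fin fv fT oU) (val_fin fv fT oV) lee_fin.
Qed.

Lemma rf_mod f : is_valuation Jopen f -> f setT != +oo%E ->
  forall U V, Jopen U -> Jopen V ->
  rf f U + rf f V = rf f (U `|` V) + rf f (U `&` V).
Proof.
move=> fv fT U V oU oV; have := (fv.2.2.2 U V oU oV).
rewrite (val_fin fv fT oU) (val_fin fv fT oV) (val_fin fv fT (JopenU oU oV)).
by rewrite (val_fin fv fT (JopenI oU oV)) -!EFinD => -[].
Qed.

Lemma rf_sub f : is_valuation Jopen f -> f setT != +oo%E ->
  forall U V, Jopen U -> Jopen V -> rf f (U `|` V) <= rf f U + rf f V.
Proof.
move=> fv fT U V oU oV; rewrite (rf_mod fv fT oU oV).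
have := rf_ge0 fv fT (JopenI oU oV); lra.
Qed.

Lemma rf_le f h : is_valuation Jopen f -> f setT != +oo%E ->
  is_valuation Jopen h -> h setT != +oo%E -> val_le Jopen f h ->
  forall U, Jopen U -> rf f U <= rf h U.
Proof.
move=> fv fT hv hT fh U oU; have := fh U oU.
by rewrite (val_fin fv fT oU) (val_fin hv hT oU) lee_fin.
Qed.

Lemma rf0 f : is_valuation Jopen f -> rf f set0 = 0.
Proof. by move=> fv; rewrite /rf fv.2.1. Qed.

End RealVal.

Section Window.
Variable R : realType.
Implicit Types f : set Jtype -> \bar R.

Definition PT f := forall e : R, 0 < e ->
  exists K0, forall K, (K0 <= K)%N -> (f (Qs K) <= e%:E)%E.

Lemma finM f (M : R) : (f setT <= M%:E)%E -> f setT != +oo%E.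
Proof.
move=> h; apply/negP => /eqP e; move: h; rewrite e leye_eq => /eqP.
by [].
Qed.

Lemma val_le_trans f g h : val_le Jopen f g -> val_le Jopen g h -> val_le Jopen f h.
Proof. by move=> fg gh U oU; exact: le_trans (fg U oU) (gh U oU). Qed.

Lemma window (F : set (set Jtype -> \bar R)) (M eta : R) :
  0 < eta ->
  (forall f, F f -> is_valuation Jopen f) ->
  (forall f, F f -> (f setT <= M%:E)%E) ->
  (forall f, F f -> PT f) ->
  directed_by (val_le Jopen) F ->
  exists Nw, forall L f, F f -> exists V, Jopen V /\
    (forall c, (Nw < c <= L)%N -> V (c, None)) /\ (f V <= eta%:E)%E.
Proof.
move=> eta0 Fv FM FT [[f1 Ff1] dir].
have Ffin f : F f -> f setT != +oo%E by move=> Ff; exact: finM (FM f Ff).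
apply: contrapT => H.
have H' : forall Nw, exists p : nat * (set Jtype -> \bar R), F p.2 /\
   (forall V, Jopen V -> (forall c, (Nw < c <= p.1)%N -> V (c, None)) ->
      (eta%:E < p.2 V)%E).
  move=> Nw; apply: contrapT => h; apply: H; exists Nw => L f Ff.
  apply: contrapT => h2; apply: h; exists (L, f); split => // V oV hV.
  rewrite ltNge; apply/negP => le; apply: h2; exists V; split => //.
case: (choice H') => ch hch.
have chgt n : (n < (ch n).1)%N.
  rewrite ltnNge; apply/negP => le; case: (hch n) => Fc /(_ set0 Jopen0).
  have hw : forall c, (n < c <= (ch n).1)%N -> (set0 : set Jtype) (c, None).
    move=> c /andP [h1 h2]; move: (leq_ltn_trans (leq_trans h2 le) h1).
    by rewrite ltnn.
  move=> /(_ hw); rewrite ((Fv _ Fc).2.1) lte_fin => e0.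
  by move: (lt_trans e0 eta0); rewrite ltxx.
pose Ns j := iter j (fun n => (ch n).1) 0%N.
have NsS j : Ns j.+1 = (ch (Ns j)).1 by [].
have Nsmono j l : (j <= l)%N -> (Ns j <= Ns l)%N.
  elim: l => [|l IH]; first by rewrite leqn0 => /eqP ->.
  rewrite leq_eqVlt => /orP [/eqP ->//|]; rewrite ltnS => /IH jl.
  by apply: (leq_trans jl); rewrite NsS ltnW // chgt.
pose fs j := (ch (Ns j)).2.
have M0 : 0 <= M.
  have := (Fv _ Ff1).1 _ JopenT; move/le_trans => /(_ _ (FM _ Ff1)).
  by rewrite lee_fin.
pose k := (Num.Def.archi_bound ((M + eta) / eta)).+1.
have k0 : 0 < k%:R :> R by rewrite ltr0n.
have kgt : M + eta < k%:R * eta.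
  have h1 := archi_boundP (divr_ge0 (addr_ge0 M0 (ltW eta0)) (ltW eta0)).
  rewrite ltr_pdivrMr // in h1; apply: (lt_le_trans h1).
  by rewrite ler_pM2r // ler_nat /k leqnSn.
have [h [Fh hub]] : exists h, F h /\ forall j, (j < k)%N -> val_le Jopen (fs j) h.
  elim: k {k0 kgt} => [|n [h0 [Fh0 hub0]]]; first by exists f1.
  have Ffs : F (fs n) by case: (hch (Ns n)).
  case: (dir _ _ Fh0 Ffs) => z Fz [h0z fsz]; exists z; split => // j.
  rewrite ltnS leq_eqVlt => /orP [/eqP ->//|/hub0 jh].
  exact: val_le_trans jh h0z.
have hv := Fv _ Fh; have hT := Ffin _ Fh.
have ek0 : 0 < eta / k%:R by rewrite divr_gt0.
case: (FT _ Fh _ ek0) => K0 hK0.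
pose K := maxn K0 (Ns k).+1.
have KK0 : (K0 <= K)%N by rewrite leq_maxl.
have NK : (Ns k < K)%N by rewrite leq_maxr.
have hq : rf h (Qs K) * k%:R <= eta.
  by have := hK0 _ KK0; rewrite (val_fin hv hT (Qs_open K)) lee_fin ler_pdivlMr.
have claim : forall j, (j <= k)%N ->
    j%:R * eta <= rf h (Zs 0 (Ns j) K) + j%:R * rf h (Qs K).
  elim => [|j IH] jk.
    by rewrite !mul0r addr0; exact: rf_ge0 hv hT _ (Zs_open _ _ _).
  have jk' : (j <= k)%N by exact: ltnW.
  have IH' := IH jk'.
  have hm := rf_mod hv hT (Zs_open 0 (Ns j) K) (Zs_open (Ns j) (Ns j.+1) K).
  rewrite ZsU // in hm; last by exact: Nsmono.
  rewrite ZsI in hm; last by apply: leq_ltn_trans NK; exact: Nsmono.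
  have yj : eta < rf h (Zs (Ns j) (Ns j.+1) K).
    case: (hch (Ns j)) => Ffj /(_ _ (Zs_open (Ns j) (Ns j.+1) K)).
    have hw : forall c, (Ns j < c <= (ch (Ns j)).1)%N -> Zs (Ns j) (Ns j.+1) K (c, None).
      by move=> c hc; split => //; left.
    move=> /(_ hw) lt1.
    have := hub j jk (Zs (Ns j) (Ns j.+1) K) (Zs_open _ _ _).
    rewrite (val_fin hv hT (Zs_open _ _ _)) => le1.
    by have := lt_le_trans lt1 le1; rewrite lte_fin.
  rewrite -natr1 !mulrDl !mul1r; lra.
have := claim k (leqnn k).
have zM : rf h (Zs 0 (Ns k) K) <= M.
  have := FM _ Fh; rewrite (val_fin hv hT JopenT) lee_fin => hM.
  apply: le_trans hM; apply: rf_mono hv hT _ _ (Zs_open _ _ _) JopenT _ => //.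
rewrite [k%:R * rf h (Qs K)]mulrC; lra.
Qed.
End Window.

Section Closure.
Variable R : realType.
Implicit Types f : set Jtype -> \bar R.

Definition PA f := forall e : R, 0 < e -> exists N1, forall N, (N1 <= N)%N ->
  forall m, (f setT <= f (Vs N m) + e%:E)%E.

Definition Sset : set (set Jtype -> \bar R) :=
  fun f => f setT = +oo%E \/ (PA f /\ PT f).

Lemma Sset_closed F g : F `<=` Sset -> is_directed_sup Jopen F g -> Sset g.
Proof.
move=> FS [Fcv [dirF [gcv gsup]]].
have Fv f : F f -> is_valuation Jopen f by move=> Ff; exact: (Fcv f Ff).1.
have gv := gcv.1.
have fleg f U : F f -> Jopen U -> (f U <= g U)%E.
  by move=> Ff oU; rewrite gsup //; apply: ereal_sup_ubound; exists f.
rewrite /Sset; case: (eqVneq (g setT) +oo%E) => [->|gT]; [by left|right].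
pose M := rf g setT.
have gM : g setT = M%:E by exact: val_fin gv gT _ JopenT.
have FM f : F f -> (f setT <= M%:E)%E by move=> Ff; rewrite -gM; exact: fleg _ _ Ff JopenT.
have Ffin f : F f -> f setT != +oo%E by move=> Ff; exact: finM (FM f Ff).
have FS' f : F f -> PA f /\ PT f.
  move=> Ff; case: (FS f Ff) => // e; by move: (Ffin f Ff); rewrite e.
have fle f U : F f -> Jopen U -> rf f U <= rf g U.
  move=> Ff oU; have := fleg f U Ff oU.
  by rewrite (val_fin (Fv _ Ff) (Ffin _ Ff) oU) (val_fin gv gT oU) lee_fin.
have approx : forall e : R, 0 < e -> exists2 f0, F f0 & M < rf f0 setT + e.
  move=> e e0.
  have fs : ereal_sup [set f setT | f in F] \is a fin_num by rewrite -(gsup _ JopenT) gM.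
  case: (ub_ereal_sup_adherent e0 fs) => _ [f0 Ff0 <-].
  rewrite -(gsup _ JopenT) gM (val_fin (Fv _ Ff0) (Ffin _ Ff0) JopenT) -EFinB lte_fin => h.
  by exists f0 => //; lra.
split.
- move=> e e0; have e20 : 0 < e / 2 by rewrite divr_gt0.
  case: (approx _ e20) => f0 Ff0 h0.
  case: (FS' _ Ff0) => PA0 _; case: (PA0 _ e20) => N1 hN1.
  exists N1 => N hN m; have := hN1 N hN m.
  have f0v := Fv _ Ff0; have f0T := Ffin _ Ff0.
  rewrite (val_fin f0v f0T JopenT) (val_fin f0v f0T (Vs_open N m)) -EFinD lee_fin => h1.
  rewrite gM (val_fin gv gT (Vs_open N m)) -EFinD lee_fin.
  have := fle _ _ Ff0 (Vs_open N m); lra.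
- move=> e e0; pose eta := e / 5.
  have eta0 : 0 < eta by rewrite divr_gt0.
  case: (approx _ eta0) => f0 Ff0 h0.
  have f0v := Fv _ Ff0; have f0T := Ffin _ Ff0.
  case: (FS' _ Ff0) => PA0 _; case: (PA0 _ eta0) => N1 hN1.
  have [Nw hNw] := window eta0 Fv FM (fun f Ff => (FS' f Ff).2) dirF.
  pose N := maxn N1 Nw.
  exists N.+1 => K hK.
  rewrite gsup; last exact: Qs_open.
  apply: ge_ereal_sup => _ [f Ff <-].
  case: dirF => _ dir; case: (dir _ _ Ff Ff0) => f' Ff' [ff' f0f'].
  apply: le_trans (ff' _ (Qs_open K)) _.
  have fv := Fv _ Ff'; have fT := Ffin _ Ff'.
  case: (FS' _ Ff') => _ PT'; case: (PT' _ eta0) => L0 hL0.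
  pose L := maxn L0 K.
  case: (hNw L f' Ff') => V [oV [hV fV]].
  have hk : forall c, exists n, (Nw < c <= L)%N -> V (c, Some n).
    move=> c; case: (pselect (Nw < c <= L)%N) => hc.
      by case: (Jopen_col oV (hV c hc)) => n hn; exists n.
    by exists 0%N.
  case: (choice hk) => kc hkc.
  pose m c := maxn (kc c) L.+1.
  have incl : Qs K `&` Vs N m `<=` V `|` Qs L.+1.
    move=> [c ob] [[/= Kc Kob] [/= cN|/= mob]].
      by move: (leq_trans hK Kc); rewrite ltnNge cN.
    case: (leqP c L) => cL.
    + left.
      have hc : (Nw < c <= L)%N.
        rewrite cL andbT; apply: leq_trans Kc; apply: leq_trans hK.
        by rewrite ltnS leq_maxr.
      case: ob Kob mob => [b|] _ /= mob; last exact: hV.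
      apply: (Jopen_up oV _ (hkc c hc)); apply: Jle_col.
      by apply: leq_trans mob; rewrite leq_maxl.
    + by right; split => //=; apply: geK_le mob; rewrite leq_maxr.
  have oQK := Qs_open K; have oVs := Vs_open N m; have oQL := Qs_open L.+1.
  have hmod := rf_mod fv fT oQK oVs.
  have h1 : rf f' (Qs K `|` Vs N m) <= M.
    have := rf_mono fv fT (JopenU oQK oVs) JopenT (@subsetT _ _).
    have := FM _ Ff'; rewrite (val_fin fv fT JopenT) lee_fin; lra.
  have h2 : rf f' (Qs K `&` Vs N m) <= rf f' V + rf f' (Qs L.+1).
    have := rf_mono fv fT (JopenI oQK oVs) (JopenU oV oQL) incl.
    have := rf_sub fv fT oV oQL; lra.
  have h3 : rf f' V <= eta by move: fV; rewrite (val_fin fv fT oV) lee_fin.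
  have h4 : rf f' (Qs L.+1) <= eta.
    have : (L0 <= L.+1)%N by apply: leqW; rewrite leq_maxl.
    by move/hL0; rewrite (val_fin fv fT oQL) lee_fin.
  have h5 : rf f0 setT <= rf f0 (Vs N m) + eta.
    have := hN1 N (leq_maxl _ _) m.
    by rewrite (val_fin f0v f0T JopenT) (val_fin f0v f0T oVs) -EFinD lee_fin.
  have h6 : rf f0 (Vs N m) <= rf f' (Vs N m) by exact: rf_le f0v f0T fv fT f0f' _ oVs.
  rewrite (val_fin fv fT oQK) lee_fin.
  have : e = 5 * eta by rewrite /eta mulrC -mulrA mulVf ?mulr1 // pnatr_eq0.
  lra.
Qed.
End Closure.

Section Simple.
Variable R : realType.

Lemma simple_fin (s : seq (R * Jtype)) U : exists r : R, simple_of s U = r%:E.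
Proof.
elim: s => [|p s [r IH]]; first by exists 0; rewrite /simple_of big_nil.
rewrite /simple_of big_cons -/(simple_of s U) IH /dirac.
by case: asboolP => _; [exists (p.1 * 1 + r)| exists (p.1 * 0 + r)].
Qed.

Lemma simple_props (s : seq (R * Jtype)) : exists B,
  (forall K, (B <= K)%N -> simple_of s (Qs K) = 0%E) /\
  (forall N m, (B <= N)%N -> simple_of s (Vs N m) = simple_of s setT).
Proof.
elim: s => [|p s [B [IHQ IHV]]].
  by exists 0%N; split => *; rewrite /simple_of !big_nil.
exists (maxn B (p.2.1).+1); split.
- move=> K hK; rewrite /simple_of big_cons -/(simple_of s (Qs K)).
  rewrite IHQ; last by apply: leq_trans hK; rewrite leq_maxl.
  rewrite /dirac asboolF ?mule0 ?adde0 //.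
  move=> [h _]; have := leq_trans (leq_maxr B (p.2.1).+1) hK.
  by rewrite ltnNge h.
- move=> N m hN; rewrite /simple_of !big_cons -/(simple_of s (Vs N m)) -/(simple_of s setT).
  rewrite IHV; last by apply: leq_trans hN; rewrite leq_maxl.
  rewrite /dirac asboolT ?asboolT //; left.
  by apply: ltnW; apply: leq_trans hN; rewrite leq_maxr.
Qed.

Lemma simple_in (f : set Jtype -> \bar R) : is_cont_valuation Jopen f -> is_simple_valuation Jopen f -> Sset (R:=R) f.
Proof.
move=> _ [s [_ fs]]; rewrite /Sset.
case: (eqVneq (f setT) +oo%E) => [->|fT]; [by left|right].
case: (simple_props s) => B [hQ hV]; split.
- move=> e e0; exists B => N hN m.
  rewrite (fs _ JopenT) (fs _ (Vs_open N m)) hV //; apply: leeDl; rewrite lee_fin ltW //.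
- move=> e e0; exists B => K hK; rewrite (fs _ (Qs_open K)) hQ // lee_fin ltW //.
Qed.

Lemma mu_notin : ~ Sset (R:=R) (Jmu R).
Proof.
rewrite /Sset; case.
  by rewrite Jmu1 //; exists (0%N, None).
case=> _ hT; have h2 : 0 < 1 / 2 :> R by rewrite divr_gt0.
case: (hT _ h2) => K0 /(_ K0 (leqnn _)).
rewrite Jmu1; last by exists (K0, None); split => /=.
rewrite lee_fin; lra.
Qed.
End Simple.

Theorem corollary3p14 (R : realType) :
  is_valuation Jopen (Jmu R) /\
  is_point_continuous Jopen (Jmu R) /\
  ~ is_minimal_valuation Jopen (Jmu R).
Proof.
split; first exact: Jmu_val.
split; first exact: Jmu_pc.
move=> H; apply: (@mu_notin R); apply: H.
- exact: simple_in.
- by move=> F g; exact: Sset_closed.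
Qed.
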